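(* Let $\mathcal{U}$ be a finite set of users, each associated with a base station $b_u$, where each base station $b$ has a finite set of integer-indexed subchannels $\mathcal{C}_b$, and assume the number of users associated with each base station $b$ is at most $|\mathcal{C}_b|$. Some users are ''ongoing'', each having a previously used subchannel $\bar c_u\in\mathcal{C}_{b_u}$, where ongoing users associated with the same base station have pairwise distinct previous subchannels. For each $u$ let $\mathcal{C}^t_u=\{\bar c_u\}$ if $u$ is ongoing and $\mathcal{C}^t_u=\mathcal{C}_{b_u}$ otherwise. Call two distinct users $u,u'$ conflicting if $b_u=b_{u'}$, or if both are ongoing with $\bar c_u\neq\bar c_{u'}$. Let $i^t_{u,u'}$ satisfy $i^t_{u,u}=0$, $i^t_{u,u'}=+\infty$ for conflicting pairs, and $i^t_{u,u'}\in[0,\infty)$ otherwise. Then every optimal solution of (P3): minimize over $\boldsymbol{c}^t$ with $c^t_u\in\mathcal{C}^t_u$ the objective $\frac12\sum_{u,u'\in\mathcal{U}}\max\{0,1-|c^t_u-c^t_{u'}|\}\, i^t_{u,u'}$ (with $0\cdot\infty=0$), is a solution of the subchannel allocation problem: it assigns pairwise different subchannels to users of the same base station, keeps each ongoing user on its previous subchannel, and among all assignments satisfying these requirements it minimizes the total co-channel interference $\frac12\sum_{u,u':\,c_u=c_{u'}} i^t_{u,u'}$.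
   Context: The subchannel allocation problem: assign to each associated user a subchannel of its base station so that users of the same base station use distinct subchannels, ongoing users keep their previous subchannels, and the total pairwise interference among users sharing a subchannel is minimized. *)

(* Defs.v *)
From HB Require Import structures.
From mathcomp Require Import all_boot all_order all_algebra.
From mathcomp Require Import finmap.
From mathcomp Require Import reals constructive_ereal.
Set Implicit Arguments. Unset Strict Implicit. Unset Printing Implicit Defensive.
Import Order.TTheory GRing.Theory Num.Theory.
Local Open Scope ring_scope.
Local Open Scope ereal_scope.

(* Users: U : finType; base stations: B : eqType; association bs : U -> B;
   subchannels of base station b: C b : {fset int};
   previous subchannel: prev u = Some cbar if u is ongoing, None otherwise. *)

Definition ongoing (U : Type) (prev : U -> option int) (u : U) : bool :=
  prev u != None.

Definition Ct (U B : Type) (C : B -> {fset int}) (bs : U -> B)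
  (prev : U -> option int) (u : U) : {fset int} :=
  match prev u with
  | Some cb => [fset cb]%fset
  | None => C (bs u)
  end.

Definition conflicting (U : eqType) (B : eqType) (bs : U -> B)
  (prev : U -> option int) (u u' : U) : bool :=
  (u != u') &&
  ((bs u == bs u') ||
   match prev u, prev u' with
   | Some a, Some b => a != b
   | _, _ => false
   end).

(* Objective of (P3); ereal multiplication satisfies 0 * +oo = 0. *)
Definition P3_obj (R : realType) (U : finType) (i : U -> U -> \bar R)
  (c : U -> int) : \bar R :=
  (2^-1)%:E * \sum_(u : U) \sum_(u' : U)
     ((Num.max 0 (1 - `|c u - c u'|)%R)%:~R)%:E * i u u'.

Definition P3_feasible (U B : Type) (C : B -> {fset int}) (bs : U -> B)
  (prev : U -> option int) (c : U -> int) : Prop :=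
  forall u, c u \in Ct C bs prev u.

Definition P3_optimal (R : realType) (U : finType) (B : Type)
  (C : B -> {fset int}) (bs : U -> B) (prev : U -> option int)
  (i : U -> U -> \bar R) (c : U -> int) : Prop :=
  P3_feasible C bs prev c /\
  forall c', P3_feasible C bs prev c' -> P3_obj i c <= P3_obj i c'.

Definition SAP_feasible (U : eqType) (B : eqType) (C : B -> {fset int})
  (bs : U -> B) (prev : U -> option int) (c : U -> int) : Prop :=
  [/\ forall u, c u \in C (bs u),
      forall u u', u != u' -> bs u = bs u' -> c u != c u'
    & forall u cb, prev u = Some cb -> c u = cb].

Definition interference (R : realType) (U : finType) (i : U -> U -> \bar R)
  (c : U -> int) : \bar R :=
  (2^-1)%:E * \sum_(u : U) \sum_(u' : U | c u == c u') i u u'.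

(* Main.v *)
Require Import Defs.
From HB Require Import structures.
From mathcomp Require Import all_boot all_order all_algebra.
From mathcomp Require Import finmap.
From mathcomp Require Import reals constructive_ereal.
From mathcomp Require Import zify.
Import Order.TTheory GRing.Theory Num.Theory.
Local Open Scope ring_scope.
Local Open Scope ereal_scope.

Lemma objE (R : realType) (U : finType) (i : U -> U -> \bar R) (c : U -> int) :
  P3_obj i c = interference i c.
Proof.
rewrite /P3_obj /interference; congr (_ * _); apply: eq_bigr => u _.
rewrite [RHS]big_mkcond; apply: eq_bigr => u' _.
case: eqP => [->|ne].
  by rewrite subrr normr0 subr0 max_r // mul1e.
have h : (1 - `|c u - c u'| <= 0)%R.
  rewrite subr_le0.
  have : (0 < `|c u - c u'|)%R by rewrite normr_gt0 subr_eq0; apply/eqP.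
  by [].
by rewrite max_l // mul0e.
Qed.
Lemma exists_sap (U : finType) (B : eqType)
  (bs : U -> B) (C : B -> {fset int}) (prev : U -> option int)
  (hcap : forall b : B, (#|[set u : U | bs u == b]| <= #|` C b|)%N)
  (hprev : forall u cb, prev u = Some cb -> cb \in C (bs u))
  (hprev_dist : forall u u' cb cb', u != u' -> bs u = bs u' ->
      prev u = Some cb -> prev u' = Some cb' -> cb != cb') :
  exists c0, SAP_feasible C bs prev c0.
Proof.
pose Ub b := [seq v <- enum U | (bs v == b) && (prev v == None)].
pose Pb b := [seq odflt 0%R (prev v) | v <- enum U & (bs v == b) && (prev v != None)].
pose av b := [seq x <- enum_fset (C b) | x \notin Pb b].
pose c0 u := match prev u with Some p => p | None => nth 0%R (av (bs u)) (index u (Ub (bs u))) end.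
have avu : forall b, uniq (av b) by move=> b; rewrite filter_uniq // fset_uniq.
have sz : forall b, (size (Ub b) <= size (av b))%N.
  move=> b.
  have e1 : (size (Pb b) + size (Ub b))%N = #|[set u : U | bs u == b]|.
    rewrite size_map !size_filter cardE /enum_mem size_filter.
    rewrite -count_predUI.
    have -> : count (predI (fun v => (bs v == b) && (prev v != None)) (fun v => (bs v == b) && (prev v == None))) (enum U) = 0%N.
      by apply/eqP; rewrite -leqn0 -(count_pred0 (enum U)) ; apply: leq_trans (sub_count _ _) _ => [v /= /andP[/andP[_ /negPf ->]] /andP[]|]//.
    rewrite addn0 (@eq_filter _ _ predT) // filter_predT.
    apply: eq_count => v /=; rewrite inE.
    by case: (prev v) => //= *; rewrite ?andbT ?andbF ?orbF ?orbT ?andbT.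
  have e2 : (count (mem (Pb b)) (enum_fset (C b)) <= size (Pb b))%N.
    rewrite -size_filter; apply: uniq_leq_size.
      by rewrite filter_uniq // fset_uniq.
    by move=> x; rewrite mem_filter => /andP[].
  have := hcap b; rewrite -e1 /av size_filter.
  have := count_predC (mem (Pb b)) (enum_fset (C b)).
  move=> h1 h2; rewrite -[X in (_ <= X)%N]/(count (predC (mem (Pb b))) (C b)).
  rewrite -(leq_add2l (count (mem (Pb b)) (C b))) h1; apply: leq_trans h2.
  by rewrite leq_add2r.
have inU : forall u, prev u = None -> u \in Ub (bs u).
  by move=> u E; rewrite mem_filter E eqxx mem_enum.
have ltU : forall u, prev u = None -> (index u (Ub (bs u)) < size (av (bs u)))%N.
  by move=> u E; apply: leq_trans (sz _); rewrite index_mem inU.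
have inav : forall u, prev u = None -> c0 u \in av (bs u).
  by move=> u E; rewrite /c0 E; apply: mem_nth; apply: ltU.
have inP : forall u u', bs u = bs u' -> forall p, prev u = Some p -> p \in Pb (bs u').
  move=> u u' eb p E; apply/mapP; exists u; last by rewrite E.
  by rewrite mem_filter E eb eqxx mem_enum.
exists c0; split.
- move=> u; case E: (prev u) => [p|].
    by rewrite /c0 E; apply: hprev.
  by have := inav u E; rewrite mem_filter => /andP[].
- move=> u u' ne eb.
  case E: (prev u) => [p|]; case E': (prev u') => [p'|].
  + by rewrite /c0 E E'; apply: hprev_dist E E'.
  + have := inav u' E'; rewrite mem_filter => /andP[hn _].
    rewrite {1}/c0 E; apply/eqP => ep; move: hn; rewrite -ep.
    by rewrite (inP u u' eb p E).
  + have := inav u E; rewrite mem_filter => /andP[hn _].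
    rewrite {2}/c0 E'; apply/eqP => ep; move: hn; rewrite ep.
    by rewrite (inP u' u (esym eb) p' E').
  + rewrite /c0 E E' -eb nth_uniq //; last 2 first.
      by apply: ltU.
      by rewrite eb; apply: ltU.
    apply/eqP => ei; move/eqP: ne; apply.
    rewrite -(nth_index u (inU u E)) -(nth_index u (inU u' E')) -eb ei //.
- by move=> u cb E; rewrite /c0 E.
Qed.

Theorem proposition2 (R : realType) (U : finType) (B : eqType)
  (bs : U -> B) (C : B -> {fset int}) (prev : U -> option int)
  (i : U -> U -> \bar R)
  (hcap : forall b : B, (#|[set u : U | bs u == b]| <= #|` C b|)%N)
  (hprev : forall u cb, prev u = Some cb -> cb \in C (bs u))
  (hprev_dist : forall u u' cb cb', u != u' -> bs u = bs u' ->
      prev u = Some cb -> prev u' = Some cb' -> cb != cb')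
  (hii : forall u, i u u = 0)
  (hconf : forall u u', conflicting bs prev u u' -> i u u' = +oo)
  (hfin : forall u u', u != u' -> ~~ conflicting bs prev u u' ->
      exists r : R, (0 <= r)%R /\ i u u' = r%:E)
  (c : U -> int) :
  P3_optimal C bs prev i c ->
  SAP_feasible C bs prev c /\
  (forall c', SAP_feasible C bs prev c' -> interference i c <= interference i c').
Proof.
move=> [Hf Hopt].
have i0 : forall u u', 0 <= i u u'.
  move=> u u'; have [->|ne] := eqVneq u u'; first by rewrite hii.
  case cf: (conflicting bs prev u u'); first by rewrite hconf // leey.
  by have [r [r0 ->]] := hfin u u' ne (negbT cf); rewrite lee_fin.
have nNy : forall x : \bar R, 0 <= x -> x != -oo by case.
have sapP3 : forall c', SAP_feasible C bs prev c' -> P3_feasible C bs prev c'.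
  move=> c' [h1 h2 h3] u; rewrite /Ct; case E: (prev u) => [p|] //.
  by rewrite (h3 u p E) in_fset1.
have finI : forall c', SAP_feasible C bs prev c' -> interference i c' \is a fin_num.
  move=> c' [h1 h2 h3]; rewrite /interference fin_numM //.
  apply/sum_fin_numP => u _ _; apply/sum_fin_numP => u' _ /eqP ec.
  have [->|ne] := eqVneq u u'; first by rewrite hii.
  have ncf : ~~ conflicting bs prev u u'.
    rewrite /conflicting ne /=; apply/norP; split.
      by apply/negP => /eqP eb; move: (h2 u u' ne eb); rewrite ec eqxx.
    case E: (prev u) => [a|] //; case E': (prev u') => [b|] //.
    by rewrite -(h3 u a E) -(h3 u' b E') ec eqxx.
  by have [r [_ ->]] := hfin u u' ne ncf.
have [c0 Hc0] := @exists_sap U B bs C prev hcap hprev hprev_dist.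
have le0 : interference i c <= interference i c0.
  by rewrite -!objE; apply: Hopt; apply: sapP3.
split; last first.
  by move=> c' Hc'; rewrite -!objE; apply: Hopt; apply: sapP3.
split.
- move=> u; have := Hf u; rewrite /Ct; case E: (prev u) => [p|] //.
  by rewrite in_fset1 => /eqP ->; apply: hprev.
- move=> u u' ne eb; apply/negP => /eqP ec.
  have cf : conflicting bs prev u u' by rewrite /conflicting ne eb eqxx.
  have hy : interference i c = +oo.
    rewrite /interference.
    suff -> : \sum_(v : U) \sum_(v' : U | c v == c v') i v v' = +oo.
      by rewrite gt0_muley // lte_fin invr_gt0 ltr0n.
    apply/esum_eqyP.
      move=> v _; apply: nNy; apply: sume_ge0 => w _; exact: i0.
    exists u; split; rewrite ?mem_index_enum //.
    apply/esum_eqyP.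
      by move=> v _; apply: nNy.
    by exists u'; split; rewrite ?mem_index_enum ?ec ?eqxx ?hconf.
  have := finI c0 Hc0; move: le0; rewrite hy leye_eq => /eqP ->; done.
- move=> u cb E; have := Hf u; rewrite /Ct E in_fset1 => /eqP //.
Qed.
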